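(* Let $\theta_i\in(0,2)$, $\alpha_i>0$, $\gamma_i>0$ and $0<\gamma_i\beta<1/\lambda_{\max}(L)$ for all $i=1,\dots,m$. Then the matrices $\mathbf H=QM^{-1}$ and $\mathbf D=Q^\top+Q-M^\top\mathbf HM$ satisfy $\mathbf H\succcurlyeq\mathbf D\succ0$.
   Context: Let $m\ge2$, $n_1,\dots,n_m\ge1$, $p,q\ge0$ integers, $n=\sum_in_i$. $L\in\mathbb R^{m\times m}$ satisfies $L=U^\top U$ with $U\in\mathbb R^{r\times m}$ of full row rank and $U\mathbf 1_m=0$ (and $L$ is compatible with a connected undirected graph on $m$ nodes, with $\mathrm{null}(L)=\mathrm{span}\{\mathbf 1_m\}$). $\mathbf U=U\otimes I_{p+q}$. Parameters $\theta_i,\alpha_i,\gamma_i>0$, $\beta>0$; $\Theta=\mathrm{diag}(\theta_1I_{n_1},\dots,\theta_mI_{n_m})$, $\Upsilon=\mathrm{diag}(\alpha_1I_{n_1},\dots,\alpha_mI_{n_m})$, $\Gamma=\mathrm{diag}(\gamma_1I_{p+q},\dots,\gamma_mI_{p+q})$; $Q=\begin{pmatrix}\Upsilon^{-1}&0&0\\0&\Gamma^{-1}&-\mathbf U^\top\\0&0&\frac1\beta I_{r(p+q)}\end{pmatrix}$, $M=\begin{pmatrix}\Theta&0&0\\0&I_{m(p+q)}&-\Gamma\mathbf U^\top\\0&0&I_{r(p+q)}\end{pmatrix}$. $A\succcurlyeq B$ means $A-B$ is symmetric positive semidefinite; $\succ0$ means symmetric positive definite. *)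

(* Defs.v *)
From HB Require Import structures.
From mathcomp Require Import all_boot all_order all_algebra.
From mathcomp Require Import mxtens.
Set Implicit Arguments. Unset Strict Implicit. Unset Printing Implicit Defensive.
Import Order.TTheory GRing.Theory Num.Theory.
Local Open Scope ring_scope.

Definition psd (R : realFieldType) (N : nat) (A : 'M[R]_N) : Prop :=
  A^T = A /\ forall x : 'cV[R]_N, 0 <= (x^T *m A *m x) 0 0.

Definition pd (R : realFieldType) (N : nat) (A : 'M[R]_N) : Prop :=
  A^T = A /\ forall x : 'cV[R]_N, x != 0 -> 0 < (x^T *m A *m x) 0 0.

Definition is_lambda_max (R : realFieldType) (N : nat) (A : 'M[R]_N) (l : R) : Prop :=
  eigenvalue A l /\ forall a : R, eigenvalue A a -> a <= l.

Definition compatible_graph (R : pzRingType) (m : nat) (L : 'M[R]_m) (e : rel 'I_m) : Prop :=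
  symmetric e /\ irreflexive e /\ (forall i j, i != j -> ~~ e i j -> L i j = 0).

Definition connected_graph (m : nat) (e : rel 'I_m) : Prop :=
  forall i j, connect e i j.

(* Main.v *)
Require Import Defs.
From HB Require Import structures.
From mathcomp Require Import all_boot all_order all_algebra.
From mathcomp Require Import mxtens.
From mathcomp Require Import complex spectral sesquilinear.
From mathcomp Require Import ring lra.
Set Implicit Arguments. Unset Strict Implicit. Unset Printing Implicit Defensive.
Import Order.TTheory GRing.Theory Num.Theory.
Local Open Scope ring_scope.


Section Blk.
Variable R : rcfType.

Lemma quad_block n1 n2 (A : 'M[R]_n1) (B : 'M[R]_n2) (x : 'cV_(n1 + n2)) :
  (x^T *m block_mx A 0 0 B *m x) 0 0 =
  ((usubmx x)^T *m A *m usubmx x) 0 0 + ((dsubmx x)^T *m B *m dsubmx x) 0 0.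
Proof.
rewrite -{1 2}[x]vsubmxK tr_col_mx mul_row_block !mulmx0 addr0 add0r.
by rewrite mul_row_col mxE.
Qed.

Lemma psd_block n1 n2 (A : 'M[R]_n1) (B : 'M[R]_n2) :
  psd A -> psd B -> psd (block_mx A 0 0 B).
Proof.
move=> [As Ap] [Bs Bp]; split.
  by rewrite tr_block_mx As Bs !trmx0.
by move=> x; rewrite quad_block addr_ge0.
Qed.

Lemma pd_psd n (A : 'M[R]_n) : pd A -> psd A.
Proof.
move=> [As Ap]; split => // x; have [->|nz] := eqVneq x 0.
  by rewrite mulmx0 mxE.
exact/ltW/Ap.
Qed.

Lemma pd_block n1 n2 (A : 'M[R]_n1) (B : 'M[R]_n2) :
  pd A -> pd B -> pd (block_mx A 0 0 B).
Proof.
move=> hA hB; have [_ Ap] := pd_psd hA; have [_ Bp] := pd_psd hB.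
case: hA hB => [As Ap'] [Bs Bp']; split.
  by rewrite tr_block_mx As Bs !trmx0.
move=> x nz; rewrite quad_block.
have [u0|unz] := eqVneq (usubmx x) 0.
  have dnz : dsubmx x != 0.
    by apply: contraNneq nz => d0; rewrite -[x]vsubmxK u0 d0 col_mx0.
  by rewrite ltr_wpDl // Bp'.
by rewrite ltr_wpDr // Ap'.
Qed.

Lemma quad_diag n (c : 'rV[R]_n) (x : 'cV_n) :
  (x^T *m diag_mx c *m x) 0 0 = \sum_k c 0 k * x k 0 ^+ 2.
Proof.
rewrite mxE; apply: eq_bigr => k _.
by rewrite mul_mx_diag !mxE mulrAC mulrC expr2 mulrA.
Qed.

Lemma quad_id n (x : 'cV[R]_n) :
  (x^T *m x) 0 0 = \sum_k x k 0 ^+ 2.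
Proof. by rewrite mxE; apply: eq_bigr => k _; rewrite mxE expr2. Qed.

Lemma sum_pos n (F : 'I_n -> R) k :
  (forall i, 0 <= F i) -> 0 < F k -> 0 < \sum_i F i.
Proof.
move=> h hk; rewrite (bigD1 k) //= ltr_wpDr //.
by apply: sumr_ge0 => i _; apply: h.
Qed.

Lemma xx_pos n (x : 'cV[R]_n) : x != 0 -> 0 < (x^T *m x) 0 0.
Proof.
move=> nz; have [k xk] : exists k, x k 0 != 0.
  apply/existsP; apply: contraNT nz; rewrite negb_exists => /forallP h.
  by apply/eqP/matrixP => i j; rewrite ord1 mxE; apply/eqP/negbNE/h.
rewrite quad_id (@sum_pos _ _ k) // => [i|]; first exact: sqr_ge0.
by rewrite lt0r sqr_ge0 sqrf_eq0 xk.
Qed.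

End Blk.


Section Core.
Variable R : rcfType.

Lemma inv_from_mul n (A B : 'M[R]_n) : A *m B = 1%:M -> invmx A = B.
Proof.
move=> h; have [uA _] := mulmx1_unit h.
by rewrite -[invmx A]mulmx1 -h mulmxA mulVmx // mul1mx.
Qed.

Lemma diag_inv n (c : 'rV[R]_n) : (forall k, c 0 k != 0) ->
  diag_mx c *m diag_mx (\row_k (c 0 k)^-1) = 1%:M.
Proof.
move=> h; rewrite mul_diag_mx; apply/matrixP => i j; rewrite !mxE.
case: (eqVneq i j) => [->|ne]; last by rewrite mulr0n mulr0.
by rewrite !mulr1n divff.
Qed.

Lemma psd_diag n (c : 'rV[R]_n) : (forall k, 0 <= c 0 k) -> psd (diag_mx c).
Proof.
move=> h; split; first exact: tr_diag_mx.
move=> x; rewrite quad_diag; apply: sumr_ge0 => k _.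
by apply: mulr_ge0; [apply: h | apply: sqr_ge0].
Qed.

Lemma pd_diag n (c : 'rV[R]_n) : (forall k, 0 < c 0 k) -> pd (diag_mx c).
Proof.
move=> h; split; first exact: tr_diag_mx.
move=> x nz; have [k xk] : exists k, x k 0 != 0.
  apply/existsP; apply: contraNT nz; rewrite negb_exists => /forallP hx.
  by apply/eqP/matrixP => i j; rewrite ord1 mxE; apply/eqP/negbNE/hx.
rewrite quad_diag (@sum_pos _ _ _ k) // => [i|].
  by apply: mulr_ge0; [apply: ltW | apply: sqr_ge0].
by apply: mulr_gt0 => //; rewrite lt0r sqr_ge0 sqrf_eq0 xk.
Qed.

Lemma core N1 N2 N3 (t y : 'rV[R]_N1) (g : 'rV[R]_N2) (B : 'M[R]_(N3,N2)) (beta : R) :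
 (forall k, 0 < t 0 k < 2) -> (forall k, 0 < y 0 k) -> (forall k, 0 < g 0 k) -> 0 < beta ->
 (forall x : 'cV_N3, x != 0 ->
    (x^T *m (B *m diag_mx g *m B^T) *m x) 0 0 < beta^-1 * (x^T *m x) 0 0) ->
 let Gam := diag_mx g in
 let Q := block_mx (invmx (diag_mx y)) 0 0
             (block_mx (invmx Gam) (- B^T) 0 (beta^-1)%:M) in
 let M := block_mx (diag_mx t) 0 0 (block_mx 1%:M (- (Gam *m B^T)) 0 1%:M) in
 let H := Q *m invmx M in
 let D := Q^T + Q - M^T *m H *m M in
 psd (H - D) /\ pd D.
Proof.
move=> ht hy hg hb hK Gam Q M H D.
pose Yi := diag_mx (\row_k (y 0 k)^-1).
pose Gi := diag_mx (\row_k (g 0 k)^-1).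
pose Ti := diag_mx (\row_k (t 0 k)^-1).
have eY : invmx (diag_mx y) = Yi.
  by apply: inv_from_mul; apply: diag_inv => k; rewrite gt_eqF.
have GGi : Gam *m Gi = 1%:M by apply: diag_inv => k; rewrite gt_eqF.
have GiG : Gi *m Gam = 1%:M by apply: mulmx1C.
have eG : invmx Gam = Gi by apply: inv_from_mul.
have TTi : diag_mx t *m Ti = 1%:M.
  by apply: diag_inv => k; have /andP[h _] := ht k; rewrite gt_eqF.
pose Minv := block_mx Ti 0 0 (block_mx 1%:M (Gam *m B^T) 0 1%:M).
have MMi : M *m Minv = 1%:M.
  rewrite /M /Minv !mulmx_block.
  by rewrite ?mul0mx ?mulmx0 ?mul1mx ?mulmx1 ?addr0 ?add0r TTi subrr -!scalar_mx_block.
have MiM : Minv *m M = 1%:M by apply: mulmx1C.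
have eM : invmx M = Minv by apply: inv_from_mul.
have eH : H = block_mx (Yi *m Ti) 0 0 (block_mx Gi 0 0 (beta^-1)%:M).
  rewrite /H eM /Q /Minv eY eG !mulmx_block.
  rewrite ?mul0mx ?mulmx0 ?mul1mx ?mulmx1 ?addr0 ?add0r.
  by rewrite mulmxA GiG mul1mx subrr.
have eD : D = block_mx (Yi + Yi - diag_mx t *m Yi) 0 0
                 (block_mx Gi 0 0 ((beta^-1)%:M - B *m Gam *m B^T)).
  rewrite /D /H eM -!mulmxA MiM mulmx1 /Q /M eY eG.
  rewrite !tr_block_mx !trmx0 !tr_scalar_mx tr_diag_mx.
  rewrite !mulmx_block ?mul0mx ?mulmx0 ?mul1mx ?mulmx1 ?addr0 ?add0r.
  rewrite !add_block_mx !opp_block_mx !add_block_mx.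
  have trY : Yi^T = Yi by apply: tr_diag_mx.
  have trG : Gi^T = Gi by apply: tr_diag_mx.
  have trGam : Gam^T = Gam by apply: tr_diag_mx.
  rewrite trY trG !linearN /= trmx_mul !trmxK trGam addrK.
  have e1 : forall n (a x : 'M[R]_n), a + a - (x + a) = a - x.
    by move=> n a x; rewrite opprD addrACA addrN addr0.
  rewrite e1 ?addr0 ?subr0 ?sub0r ?opprK ?addNr.
  by rewrite addrK !mulNmx opprK -(mulmxA B Gam Gi) GGi mulmx1 addNr mulmxA.
have tpos k : 0 < t 0 k by have /andP[] := ht k.
have tlt2 k : t 0 k < 2 by have /andP[] := ht k.
have psdS : psd (B *m (Gam *m B^T)).
  split; first by rewrite !trmx_mul trmxK tr_diag_mx mulmxA.
  move=> x; rewrite !mulmxA -(trmxK B) -trmx_mul trmxK -mulmxA.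
  have [_ ] := psd_diag (c := g) (fun k => ltW (hg k)); apply.
have pdS : pd ((beta^-1)%:M - B *m (Gam *m B^T)).
  split.
    by rewrite linearB /= tr_scalar_mx; case: psdS => -> _.
  move=> x nz; rewrite mulmxBr mulmxBl mul_mx_scalar -scalemxAl.
  have eB : forall (A C : 'M[R]_1), (A - C) 0 0 = A 0 0 - C 0 0 by move=> A C; rewrite !mxE.
  have eZ : forall a (A : 'M[R]_1), (a *: A) 0 0 = a * A 0 0 by move=> a A; rewrite !mxE.
  by rewrite eB eZ subr_gt0 (mulmxA B); exact: hK.

rewrite eH eD !opp_block_mx !add_block_mx !subrr ?oppr0 ?addr0.
split.
  apply: psd_block; last first.
    apply: psd_block; last first.
      by rewrite opprB addrC subrK -mulmxA.
    split; first by apply/matrixP => i j; rewrite !mxE.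
    by move=> x; rewrite mulmx0 mul0mx mxE.
  have -> : Yi *m Ti - (Yi + Yi - diag_mx t *m Yi) =
     diag_mx (\row_k ((y 0 k)^-1 * (t 0 k)^-1 - ((y 0 k)^-1 + (y 0 k)^-1 - t 0 k * (y 0 k)^-1))).
    rewrite /Yi /Ti !mul_diag_mx; apply/matrixP => i j; rewrite !mxE.
    by case: (eqVneq i j) => [->|ne] /=; rewrite ?mulr1n ?mulr0n; ring.
  apply: psd_diag => k; rewrite mxE.
  have tk := tpos k; have yk := hy k.

  rewrite (_ : _ - _ = (y 0 k)^-1 * (t 0 k)^-1 * (1 - t 0 k) ^+ 2).
    by apply: mulr_ge0; [apply: mulr_ge0; rewrite invr_ge0 ltW | apply: sqr_ge0].
  by field; rewrite !gt_eqF.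
apply: pd_block.
  have -> : Yi + Yi - diag_mx t *m Yi =
     diag_mx (\row_k ((y 0 k)^-1 + (y 0 k)^-1 - t 0 k * (y 0 k)^-1)).
    rewrite /Yi !mul_diag_mx; apply/matrixP => i j; rewrite !mxE.
    by case: (eqVneq i j) => [->|ne] /=; rewrite ?mulr1n ?mulr0n; ring.
  apply: pd_diag => k; rewrite mxE.
  have tk := tlt2 k; have yk := hy k.
  rewrite (_ : _ - _ = (y 0 k)^-1 * (2 - t 0 k)); last by ring.
  by apply: mulr_gt0; rewrite ?invr_gt0 // subr_gt0.
apply: pd_block; last by rewrite -mulmxA.
by apply: pd_diag => k; rewrite mxE invr_gt0.
Qed.
End Core.


Section Tens.
Variable R : rcfType.

Lemma sum_tens r k (F : 'I_(r * k) -> R) :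
  \sum_t F t = \sum_(s < r) \sum_(j < k) F (mxtens_index (s, j)).
Proof.
rewrite pair_big /= (reindex (@mxtens_index r k)) /=.
  by apply: eq_bigr => -[s j].
by exists (@mxtens_unindex r k) => t _; rewrite (mxtens_indexK, mxtens_unindexK).
Qed.

Lemma quad_exp n (M : 'M[R]_n) (x : 'cV_n) :
  (x^T *m M *m x) 0 0 = \sum_a \sum_b x a 0 * M a b * x b 0.
Proof.
rewrite mxE; under eq_bigr do rewrite mxE mulr_suml.
rewrite exchange_big; apply: eq_bigr => a _; apply: eq_bigr => b _.
by rewrite mxE.
Qed.

Definition slice r k (x : 'cV[R]_(r * k)) (j : 'I_k) : 'cV[R]_r :=
  \col_s x (mxtens_index (s, j)) 0.

Lemma quad_tens r k (S : 'M[R]_r) (x : 'cV_(r * k)) :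
  (x^T *m (S *t (1%:M : 'M_k)) *m x) 0 0 =
  \sum_(j < k) ((slice x j)^T *m S *m slice x j) 0 0.
Proof.
rewrite quad_exp sum_tens.
transitivity (\sum_(s < r) \sum_(j < k) \sum_(s' < r)
   x (mxtens_index (s, j)) 0 * S s s' * x (mxtens_index (s', j)) 0).
  apply: eq_bigr => s _; apply: eq_bigr => j _; rewrite sum_tens.
  apply: eq_bigr => s' _; rewrite (bigD1 j) //= big1 ?addr0.
    by rewrite tensmxE !mxE eqxx mulr1n mulr1.
  by move=> jj nj; rewrite tensmxE mxE eq_sym (negbTE nj) mulr0n mulr0 mulr0 mul0r.
rewrite exchange_big; apply: eq_bigr => j _; rewrite quad_exp.
by apply: eq_bigr => s _; apply: eq_bigr => s' _; rewrite !mxE.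
Qed.

Lemma id_tens r k (x : 'cV[R]_(r * k)) :
  (x^T *m x) 0 0 = \sum_(j < k) ((slice x j)^T *m slice x j) 0 0.
Proof.
rewrite quad_id sum_tens exchange_big; apply: eq_bigr => j _.
by rewrite quad_id; apply: eq_bigr => s _; rewrite mxE.
Qed.

End Tens.


Section Ray.
Variable R : rcfType.
Local Notation C := (complex R).
Local Notation f := (real_complex R).

Lemma f_real (a : R) : f a \is Num.real.
Proof. by rewrite complex_real. Qed.

Lemma conj_f (a : R) : Num.conj (f a) = f a.
Proof. by apply/CrealP; apply: f_real. Qed.

Lemma eig_transfer n (A : 'M[R]_n) (a : R) :
  eigenvalue (map_mx f A) (f a) -> eigenvalue A a.
Proof.
by rewrite !eigenvalue_root_char -map_char_poly fmorph_root.
Qed.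

Lemma rayleigh n (A : 'M[R]_n) (l : R) :
  A^T = A -> (forall a, eigenvalue A a -> a <= l) ->
  forall x : 'cV[R]_n, (x^T *m A *m x) 0 0 <= l * (x^T *m x) 0 0.
Proof.
move=> As Hl x.
set Ac := map_mx f A.
have Ah : Ac \is hermsymmx.
  apply: realsym_hermsym.
    apply/is_hermitianmxP; rewrite expr0 scale1r map_mx_id //.
    by rewrite /Ac; apply/matrixP => i j; rewrite !mxE -{1}As mxE.
  by apply/mxOverP => i j; rewrite mxE f_real.
have := hermitian_normalmx Ah => /orthomx_spectralP.
set P := spectralmx Ac; set d := spectral_diag Ac => AcE.
have Pu : P \is unitarymx by apply: spectral_unitarymx.
rewrite invmx_unitary // in AcE.
have PPt : P *m map_mx Num.conj P^T = 1%:M by apply/unitarymxP.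
have PtP : map_mx Num.conj P^T *m P = 1%:M by apply: mulmx1C.
have dreal := hermitian_spectral_diag_real Ah.
have dle : forall i, d 0 i <= f l.
  move=> i; have /complex_realP [k dk] : d 0 i \is Num.real by apply: (mxOverP dreal).
  rewrite dk lecR; apply: Hl; apply: eig_transfer; rewrite -dk.
  apply/eigenvalueP; exists (row i P).
    rewrite -row_mul -/Ac AcE !mulmxA PPt mul1mx row_mul row_diag_mx -scalemxAl.
    by congr (_ *: _); rewrite rowE.
  apply/eqP => h; have := congr1 (mulmx^~ (map_mx Num.conj P^T)) h.
  rewrite /= -row_mul PPt mul0mx row1 => /rowP/(_ i); rewrite !mxE !eqxx /=.
  by move/eqP; rewrite oner_eq0.
have mf : forall m1 n1 (M : 'M[R]_(m1,n1)) i j, f (M i j) = map_mx f M i j.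
  by move=> *; rewrite mxE.
pose xc := map_mx f x; pose y := P *m xc.
have yT : map_mx Num.conj y^T = xc^T *m map_mx Num.conj P^T.
  rewrite /y trmx_mul map_mxM; congr (_ *m _).
  by apply/matrixP => i j; rewrite !mxE; exact: conj_f.
have E1 : f ((x^T *m A *m x) 0 0) = (map_mx Num.conj y^T *m diag_mx d *m y) 0 0.
  rewrite yT /y mf !map_mxM.
  rewrite (_ : map_mx _ A = Ac) // (_ : map_mx _ x^T = xc^T); last first.
    by apply/matrixP => i j; rewrite !mxE.
  by rewrite AcE !mulmxA.
have E2 : f (l * (x^T *m x) 0 0) = f l * (map_mx Num.conj y^T *m y) 0 0.
  rewrite yT /y rmorphM; congr (_ * _).
  rewrite mulmxA -(mulmxA xc^T) PtP mulmx1 !mxE rmorph_sum.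
  by apply: eq_bigr => k _; rewrite !mxE rmorphM.
rewrite -lecR E1 E2 mxE [X in _ <= _ * X]mxE mulr_sumr; apply: ler_sum => j _.
rewrite mul_mx_diag mxE mulrAC [_ * (_ * _)]mulrC; apply: ler_wpM2l; last exact: dle.
by rewrite mxE mulrC [y^T 0 j]mxE mul_conjC_ge0.
Qed.
End Ray.


Lemma mxdiag_scal (R : rcfType) m (nn : 'I_m -> nat) (c : 'I_m -> R) :
  \mxdiag_(i < m) ((c i)%:M : 'M[R]_(nn i)) = diag_mx (\row_k c (tagnat.sig1 k)).
Proof.
transitivity (\mxdiag_(i < m) diag_mx (const_mx (c i) : 'rV[R]_(nn i))).
  by apply: eq_mxdiag => i; rewrite diag_const_mx.
rewrite -diag_mxrow; congr diag_mx; apply/rowP => k; rewrite !mxE.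
done.
Qed.

Lemma gam_diag (R : rcfType) m k (gamma : 'I_m -> R) :
  diag_mx (\row_i gamma i) *t (1%:M : 'M[R]_k) =
  diag_mx (\row_t gamma (mxtens_unindex t).1).
Proof.
apply/matrixP => a b; case: (mxtens_indexP a) => i j; case: (mxtens_indexP b) => i' j'.
rewrite tensmxE !mxE mxtens_indexK /= (can_eq (@mxtens_indexK m k)) xpair_eqE.
by case: (i == i'); case: (j == j'); rewrite /= ?mulr1n ?mulr0n ?mulr1 ?mulr0 ?mul0r.
Qed.

Lemma Kbound (R : rcfType) m r k (U : 'M[R]_(r, m)) (L : 'M_m) lmax
  (gamma : 'I_m -> R) (beta : R) :
  L = U^T *m U -> is_lambda_max L lmax -> (forall i, 0 < gamma i) -> 0 < beta ->
  (forall i, 0 < gamma i * beta < lmax^-1) -> (0 < m)%N ->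
  forall x : 'cV_(r * k), x != 0 ->
   (x^T *m ((U *t (1%:M : 'M_k)) *m diag_mx (\row_t gamma (mxtens_unindex t).1)
      *m (U *t (1%:M : 'M_k))^T) *m x) 0 0 < beta^-1 * (x^T *m x) 0 0.
Proof.
move=> hL [lev lmx] hg hb hgb hm x nz.
pose i0 : 'I_m := Ordinal hm.
case: (@arg_maxP _ _ _ i0 xpredT gamma isT) => istar _ Hmax.
set gs := gamma istar.
have lpos : 0 < lmax.
  by have /andP[h1 h2] := hgb i0; rewrite -invr_gt0; apply: lt_trans h2; exact: h1.
pose Ub := U *t (1%:M : 'M[R]_k).
pose z := Ub^T *m x.
have e1 : (x^T *m (Ub *m diag_mx (\row_t gamma (mxtens_unindex t).1) *m Ub^T) *m x) 0 0
    = (z^T *m diag_mx (\row_t gamma (mxtens_unindex t).1) *m z) 0 0.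
  by rewrite /z trmx_mul trmxK !mulmxA.
have e2 : (z^T *m z) 0 0 = (x^T *m ((U *m U^T) *t (1%:M : 'M_k)) *m x) 0 0.
  by rewrite /z trmx_mul trmxK !mulmxA -(mulmxA _ Ub) /Ub trmx_tens tensmx_mul trmx1 mulmx1.
have b1 : (z^T *m diag_mx (\row_t gamma (mxtens_unindex t).1) *m z) 0 0 <= gs * (z^T *m z) 0 0.
  rewrite quad_diag quad_id mulr_sumr; apply: ler_sum => t _; rewrite mxE.
  by apply: ler_wpM2r; [apply: sqr_ge0 | apply: Hmax].
have ray1 : forall v : 'cV_r, (v^T *m (U *m U^T) *m v) 0 0 <= lmax * (v^T *m v) 0 0.
  apply: rayleigh; first by rewrite trmx_mul trmxK.
  move=> a /eigenvalueP [v va vnz].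
  have [->|anz] := eqVneq a 0; first exact: ltW.
  apply: lmx; apply/eigenvalueP; exists (v *m U).
    by rewrite hL mulmxA -(mulmxA v) va -scalemxAl.
  apply: contraNneq vnz => h.
  have : v *m (U *m U^T) = 0 by rewrite mulmxA h mul0mx.
  by rewrite va => /eqP; rewrite scaler_eq0 (negbTE anz).
have b2 : (z^T *m z) 0 0 <= lmax * (x^T *m x) 0 0.
  rewrite e2 quad_tens id_tens mulr_sumr; apply: ler_sum => j _; exact: ray1.
have xpos := xx_pos nz.
have gpos : 0 < gs by apply: hg.
have key : gs * lmax < beta^-1.
  have /andP[_ h] := hgb istar.
  rewrite -(ltr_pM2r hb) mulVf ?gt_eqF // mulrAC.
  by rewrite -(mulVf (lt0r_neq0 lpos)) ltr_pM2r.
rewrite -/Ub e1; apply: (le_lt_trans b1).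
apply: (le_lt_trans (ler_wpM2l (ltW gpos) b2)).
by rewrite mulrA ltr_pM2r.
Qed.
Theorem proposition2 (R : rcfType) (m : nat) (nn : 'I_m -> nat) (p q r : nat)
  (L : 'M[R]_m) (U : 'M[R]_(r, m)) (e : rel 'I_m)
  (theta alpha gamma : 'I_m -> R) (beta lmax : R) :
  (2 <= m)%N ->
  (forall i, 1 <= nn i)%N ->
  L = U^T *m U ->
  row_free U ->
  U *m (const_mx 1 : 'cV[R]_m) = 0 ->
  @compatible_graph R m L e -> connected_graph e ->
  (forall x : 'cV[R]_m, L *m x = 0 <-> exists c : R, x = c *: const_mx 1) ->
  is_lambda_max L lmax ->
  (forall i, 0 < theta i < 2) ->
  (forall i, 0 < alpha i) ->
  (forall i, 0 < gamma i) ->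
  0 < beta ->
  (forall i, 0 < gamma i * beta < lmax^-1) ->
  let Theta : 'M[R]_(\sum_(i < m) nn i) := \mxdiag_(i < m) ((theta i)%:M : 'M[R]_(nn i)) in
  let Ups : 'M[R]_(\sum_(i < m) nn i) := \mxdiag_(i < m) ((alpha i)%:M : 'M[R]_(nn i)) in
  let Gam : 'M[R]_(m * (p + q)) :=
    diag_mx (\row_i gamma i) *t (1%:M : 'M[R]_(p + q)) in
  let Ub : 'M[R]_(r * (p + q), m * (p + q)) := U *t (1%:M : 'M[R]_(p + q)) in
  let Q : 'M[R]_(\sum_(i < m) nn i + (m * (p + q) + r * (p + q))) :=
    block_mx (invmx Ups) 0 0
             (block_mx (invmx Gam) (- Ub^T) 0 (beta^-1)%:M) in
  let M : 'M[R]_(\sum_(i < m) nn i + (m * (p + q) + r * (p + q))) :=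
    block_mx Theta 0 0
             (block_mx 1%:M (- (Gam *m Ub^T)) 0 1%:M) in
  let H := Q *m invmx M in
  let D := Q^T + Q - M^T *m H *m M in
  psd (H - D) /\ pd D.
Proof.
move=> hm hnn hL hUf hU1 hcomp hconn hker hlmax htheta halpha hgamma hbeta hgb.
move=> Theta Ups Gam Ub Q M H D.
rewrite /D /H /M /Q /Ub /Gam /Ups /Theta !mxdiag_scal gam_diag.
apply: core.
- by move=> k; rewrite mxE.
- by move=> k; rewrite mxE.
- by move=> k; rewrite mxE.
- exact: hbeta.
- move=> x nz; apply: (Kbound hL hlmax hgamma hbeta hgb) => //.
  by apply: leq_trans hm.
Qed.
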